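(* Let $P$ and $Q$ be finite posets and let $f : P \to Q$ be a $\chi$-distinguished map. Then for every function $h : Q \to \mathbb{Z}$, \[ \int_{Q} h \, d\chi = \int_{P} (f^* h) \, d\chi , \] where $f^*h = h \circ f$.
   Context: For a finite poset $P$, the zeta function is the $P \times P$ matrix with $\zeta(x,y)=1$ if $x \le y$ and $0$ otherwise; it is invertible, and the Euler characteristic is $\chi(P) = \sum_{x,y} \zeta^{-1}(x,y)$ ($\chi(\emptyset)=0$). A filter is an upward-closed subset; $\delta_S$ is the indicator function of $S$. Every $g : P \to \mathbb{Z}$ can be written as $g = \sum_i a_i \delta_{S_i}$ with $a_i \in \mathbb{Z}$ and $S_i$ filters of $P$; the Euler calculus is $\int_P g\, d\chi = \sum_i a_i \chi(S_i)$, independent of the representation. An order-preserving map $f : P \to Q$ is $\chi$-distinguished if $\chi(f^{-1}(Q_{\ge x})) = 1$ for every $x \in Q$, where $Q_{\ge x} = \{y \in Q \mid y \ge x\}$ (with $f^{-1}(Q_{\ge x})$ given the order induced from $P$). *)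

(* Defs.v *)
From HB Require Import structures.
From mathcomp Require Import all_boot all_order all_algebra.
Set Implicit Arguments. Unset Strict Implicit. Unset Printing Implicit Defensive.
Import Order.TTheory GRing.Theory Num.Theory.
Local Open Scope ring_scope.
Local Open Scope order_scope.

Section EulerCalculus.
Context {d : Order.disp_t} {P : finPOrderType d}.

Definition zeta_mx (S : {set P}) : 'M[int]_#|S| :=
  \matrix_(i < #|S|, j < #|S|)
    (((@enum_val P (mem S) i <= @enum_val P (mem S) j)%O : bool)%:R : int).

Definition euler_char (S : {set P}) : int :=
  (\sum_(i < #|S|) \sum_(j < #|S|) (invmx (zeta_mx S)) i j)%R.

Definition is_filter (S : {set P}) : Prop :=
  forall x y : P, x \in S -> x <= y -> y \in S.

Definition filter_rep (g : P -> int) (s : seq (int * {set P})) : Prop :=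
  (forall p, p \in s -> is_filter p.2) /\
  forall x : P, g x = (\sum_(p <- s) p.1 * ((x \in p.2 : bool)%:R))%R.

(* the value  sum_i a_i chi(S_i)  of the Euler integral computed from s *)
Definition rep_integral (s : seq (int * {set P})) : int :=
  (\sum_(p <- s) p.1 * euler_char p.2)%R.

End EulerCalculus.

Definition chi_distinguished {d1 d2 : Order.disp_t}
  {P : finPOrderType d1} {Q : finPOrderType d2} (f : P -> Q) : Prop :=
  {homo f : x y / x <= y} /\
  forall x : Q, euler_char (f @^-1: [set y : Q | x <= y]) = 1%R.

(* Main.v *)
Require Import Defs.
From HB Require Import structures.
From mathcomp Require Import all_boot all_order all_algebra.
Import Order.TTheory GRing.Theory Num.Theory.
Set Implicit Arguments. Unset Strict Implicit. Unset Printing Implicit Defensive.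
Section Inv.
Local Open Scope ring_scope.
Variable n : nat.
Variable N : 'M[int]_n.
Fixpoint pw k : 'M[int]_n := if k is k'.+1 then N *m pw k' else 1%:M.

Lemma tele m : (1%:M + N) *m (\sum_(k < m) ((-1) ^+ k) *: pw k) = 1%:M - ((-1) ^+ m) *: pw m.
Proof.
elim: m => [|m IH]; first by rewrite big_ord0 mulmx0 expr0 scale1r subrr.
rewrite big_ord_recr /= mulmxDr IH -scalemxAr mulmxDl mul1mx exprS.
idtac.
by rewrite mulN1r scaleNr opprK scalerDr addrA subrK.
Qed.

Lemma nil_unit m : pw m = 0 -> (1%:M + N) \in unitmx.
Proof.
move=> H; have := tele m; rewrite H scaler0 subr0 => /mulmx1_unit; case=> //.
Qed.
End Inv.
Section Z.
Local Open Scope ring_scope.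
Context {d : Order.disp_t} {P : finPOrderType d}.

Definition below (x : P) := #|[set y : P | (y < x)%O]|.

Lemma below_lt (x y : P) : (x < y)%O -> (below x < below y)%N.
Proof.
move=> lt; rewrite /below.
have H : x |: [set z : P | (z < x)%O] \subset [set z : P | (z < y)%O].
  apply/subsetP => z; rewrite !inE => /orP [/eqP -> //|zx].
  exact: lt_trans zx lt.
by move: (subset_leq_card H); rewrite cardsU1 inE ltxx.
Qed.

Lemma zeta_unit (S : {set P}) : zeta_mx S \in unitmx.
Proof.
set N := zeta_mx S - 1%:M.
have -> : zeta_mx S = 1%:M + N by rewrite addrC subrK.
have NE i j : N i j = ((@enum_val P (mem S) i < @enum_val P (mem S) j)%O : bool)%:R.
  rewrite !mxE; case: eqVneq => [->|ne]; first by rewrite lexx ltxx subrr.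
  rewrite subr0 lt_neqAle; case: eqVneq => // /enum_val_inj E.
  by rewrite E eqxx in ne.
have key k i j : pw N k i j != 0 ->
   (k + below (@enum_val P (mem S) i) <= below (@enum_val P (mem S) j))%N.
  elim: k i j => [|k IH] i j /=.
    rewrite mxE; case: (eqVneq i j) => [-> //|ne].
  by rewrite eqxx.
  rewrite mxE => nz.
  have [l /andP[] ] : exists l, (N i l != 0) && (pw N k l j != 0).
    apply/existsP; apply: contraR nz => /existsPn H.
    apply/eqP; apply: big1 => l _.
    by move: (H l); rewrite negb_and !negbK => /orP [/eqP->|/eqP->];
      rewrite ?mul0r ?mulr0.
  rewrite NE => ltnz /IH h.
  have lt : (enum_val i < enum_val l)%O.
    by apply: contraTT ltnz => /negbTE ->; rewrite negbK.
  by rewrite addSn; apply: leq_trans h; rewrite ltn_add2l below_lt.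
apply: (nil_unit (m := #|P|.+1)).
apply/matrixP => i j; rewrite [RHS]mxE; apply/eqP; apply: contraT => /(key _ i j).
rewrite addSn => h.
have := leq_trans h (max_card _); rewrite ltnNge leq_addr //.
Qed.
End Z.
Section A.
Local Open Scope ring_scope.
Context {d : Order.disp_t} {P : finPOrderType d}.

Definition cone_one (v : P -> int) := forall x : P, \sum_(y | (x <= y)%O) v y = 1.

Lemma euler_filter (v : P -> int) (S : {set P}) :
  cone_one v -> is_filter S -> euler_char S = \sum_(x in S) v x.
Proof.
move=> hv hS.
pose w : 'cV[int]_#|S| := \col_i v (enum_val i).
pose ones : 'cV[int]_#|S| := const_mx 1.
have Zw : zeta_mx S *m w = ones.
  apply/matrixP => i k; rewrite !mxE -(hv (enum_val i)).
  under eq_bigr do rewrite !mxE.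
  rewrite -(big_enum_val (fun y => ((enum_val i <= y)%O : bool)%:R * v y)).
  rewrite big_mkcond /= [RHS]big_mkcond /=; apply: eq_bigr => y _.
  case: ifP => yS; case: ifP => //=; rewrite ?mul1r ?mul0r //.
  by move=> le; move: (hS _ _ (enum_valP i) le); rewrite yS.
have Ew : w = invmx (zeta_mx S) *m ones by rewrite -Zw mulKmx // zeta_unit.
rewrite /euler_char (big_enum_val v).
apply: eq_bigr => i _.
have := congr1 (fun M : 'cV[int]_#|S| => M i 0) Ew; rewrite !mxE => ->.
by apply: eq_bigr => j _; rewrite mxE mulr1.
Qed.
End A.
Section B.
Local Open Scope ring_scope.
Context {d : Order.disp_t} {P : finPOrderType d}.

Lemma exists_cone : exists v : P -> int, cone_one v.
Proof.
pose T := [set: P].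
pose w : 'cV[int]_#|T| := invmx (zeta_mx T) *m const_mx 1.
exists (fun x => w (enum_rank_in (in_setT x) x) 0) => x.
have Zw : zeta_mx T *m w = const_mx 1 by rewrite mulKVmx // zeta_unit.
pose i := enum_rank_in (in_setT x) x.
have := congr1 (fun M : 'cV[int]_#|T| => M i 0) Zw; rewrite !mxE => <-.
have ei : enum_val i = x by rewrite /i enum_rankK_in // in_setT.
transitivity (\sum_(j < #|T|) ((enum_val i <= enum_val j)%O : bool)%:R *
    w (enum_rank_in (in_setT (enum_val j)) (enum_val j)) 0).
  rewrite -(big_enum_val (fun y => ((enum_val i <= y)%O : bool)%:R *
    w (enum_rank_in (in_setT y) y) 0)) ei big_mkcond /=.
  by apply: eq_big => y; rewrite ?in_setT // => _; case: ifP; rewrite ?mul1r ?mul0r.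
by apply: eq_bigr => j _; rewrite [zeta_mx T i j]mxE enum_valK_in.
Qed.

Lemma rep_int (v : P -> int) (g : P -> int) s :
  cone_one v -> filter_rep g s -> rep_integral s = \sum_x g x * v x.
Proof.
move=> hv [hs hg]; rewrite /rep_integral.
transitivity (\sum_(p <- s) \sum_x p.1 * (x \in p.2)%:R * v x).
  rewrite big_seq [RHS]big_seq; apply: eq_bigr => p ps.
  rewrite (euler_filter hv (hs p ps)) big_mkcond mulr_sumr /=.
  by apply: eq_bigr => x _; case: (x \in p.2); rewrite ?mulr1 ?mulr0 ?mul0r.
rewrite exchange_big; apply: eq_bigr => x _; rewrite hg mulr_suml.
by apply: eq_bigr.
Qed.
End B.

Theorem theorem4p10 (d1 d2 : Order.disp_t)
  (P : finPOrderType d1) (Q : finPOrderType d2) (f : P -> Q)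
  (hf : chi_distinguished f) (h : Q -> int)
  (sQ : seq (int * {set Q})) (sP : seq (int * {set P})) :
  filter_rep h sQ -> filter_rep (h \o f) sP ->
  rep_integral sQ = rep_integral sP.
Proof.
move=> hQ hP; case: hf => mono hchi.
have [v hv] := exists_cone (P := P).
pose dq (q : Q) := (\sum_(p | f p == q) v p)%R.
have hd : cone_one dq.
  move=> x; rewrite /dq.
  have E : (\sum_(p | (x <= f p)%O) v p = \sum_(y | (x <= y)%O) \sum_(p | f p == y) v p)%R.
    rewrite (partition_big f (fun y => (x <= y)%O)) //; apply: eq_bigr => y xy.
    by apply: eq_bigl => p; case: (eqVneq (f p) y) => [->|]; rewrite ?andbF ?andbT.
  rewrite -E.
  rewrite -(hchi x) (euler_filter hv).
    by apply: eq_bigl => p; rewrite !inE.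
  move=> a b; rewrite !inE => xa ab; exact: le_trans xa (mono _ _ ab).
rewrite (rep_int hd hQ) (rep_int hv hP).
rewrite (partition_big f predT) //=; apply: eq_bigr => q _.
rewrite /dq mulr_sumr; apply: eq_bigr => p /eqP <-; done.
Qed.
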